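(* Let $\Delta,\Lambda\in\mathcal T_b$ with $\Delta\subset\Lambda^*$, let $\gamma_\Delta,\gamma_\Lambda$ be proper oriented kernels on $\Delta$ and $\Lambda$, and put $\Gamma=\Delta\cup\Lambda$. Then: (i) $\Gamma\in\mathcal T_b$, $\Gamma_+=\Delta_+\cup\Lambda_+$ and $\Gamma_-=\Delta_-\cup\Lambda_-$; (ii) the composition $\gamma_\Gamma:=\gamma_\Delta\gamma_\Lambda$ (defined on $\mathcal F_{S\setminus\Gamma_+}$ by $\gamma_\Gamma(A,\omega)=\int\gamma_\Lambda(A,\sigma)\gamma_\Delta(d\sigma,\omega)$) is well defined and is a proper oriented kernel on $\Gamma$; (iii) if $E$ is countable, then $\gamma_\Delta\gamma_\Lambda=\gamma_\Lambda\gamma_\Delta$.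
   Context: $(S,\le)$ is a countable partially ordered set. For $x\in S$ write $x_-=\{y\in S:y<x\}$, $x_+=\{y\in S:y>x\}$. For $\Upsilon\subset S$: $\max(\Upsilon)=\{x\in\Upsilon: y\notin\Upsilon\text{ for all }y>x\}$, $\min(\Upsilon)=\{x\in\Upsilon: y\notin\Upsilon\text{ for all }y<x\}$, the past $\Upsilon_-=\{x\in S\setminus\Upsilon:\exists y\in\Upsilon,\ x<y\}$, the future $\Upsilon_+=\{x\in S\setminus\Upsilon:\exists y\in\Upsilon,\ x>y\}$, and the outer time $\Upsilon^*=\{x\in S: x\text{ is comparable with no }y\in\Upsilon\}$. Standing assumptions: for every $x\in S$, $\max(x_-)$ and $\min(x_+)$ are finite, every $y<x$ satisfies $y\le y_0<x$ for some $y_0\in\max(x_-)$, every $z>x$ satisfies $z\ge z_0>x$ for some $z_0\in\min(x_+)$; and $S$ has no minimal element. A finite set $\Lambda\subset S$ is a time box if $\Lambda_-\cap\Lambda_+=\emptyset$; $\mathcal T_b$ is the set of time boxes. $(E,\mathcal E)$ is a measurable space, $\Omega=E^S$ with product $\sigma$-algebra $\mathcal F$; $\mathcal F_\Upsilon$ is generated by coordinates in $\Upsilon$. A proper oriented kernel on $\Lambda\in\mathcal T_b$ is a map $\gamma_\Lambda:\mathcal F_{S\setminus\Lambda_+}\times\Omega\to[0,1]$ such that (a) $\gamma_\Lambda(\cdot,\omega)$ is a probability measure for each $\omega$; (b) $\gamma_\Lambda(A,\cdot)$ is $\mathcal F_{\Lambda_-\cup\Lambda^*}$-measurable for each $A\in\mathcal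 F_{S\setminus\Lambda_+}$; (c) $\gamma_\Lambda(A,\cdot)$ is $\mathcal F_{\Lambda_-}$-measurable for each $A\in\mathcal F_\Lambda$; (d) $\gamma_\Lambda(B,\omega)=\mathbf 1_B(\omega)$ for all $B\in\mathcal F_{\Lambda_-\cup\Lambda^*}$. *)

(* Defs.v *)
From HB Require Import structures.
From mathcomp Require Import all_boot all_order all_algebra.
From mathcomp Require Import all_classical all_reals all_analysis.
From mathcomp Require Import measurable_realfun.
Set Implicit Arguments. Unset Strict Implicit. Unset Printing Implicit Defensive.
Import Order.TTheory GRing.Theory Num.Theory.
Local Open Scope classical_set_scope.

Section PosetDefs.
Context {dS : Order.disp_t} {S : porderType dS}.
Local Open Scope order_scope.

Definition pt_past (x : S) : set S := [set y | y < x].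
Definition pt_future (x : S) : set S := [set y | x < y].

Definition maxset (U : set S) : set S :=
  [set x | U x /\ forall y, x < y -> ~ U y].
Definition minset (U : set S) : set S :=
  [set x | U x /\ forall y, y < x -> ~ U y].

Definition past (U : set S) : set S :=
  [set x | ~ U x /\ exists y, U y /\ x < y].
Definition future (U : set S) : set S :=
  [set x | ~ U x /\ exists y, U y /\ y < x].
Definition outer (U : set S) : set S :=
  [set x | forall y, U y -> ~~ (x >=< y)].

Definition standing_assumptions : Prop :=
  countable [set: S] /\
  (forall x : S,
     finite_set (maxset (pt_past x)) /\ finite_set (minset (pt_future x)) /\
     (forall y, y < x -> exists2 y0, maxset (pt_past x) y0 & y <= y0) /\
     (forall z, x < z -> exists2 z0, minset (pt_future x) z0 & z0 <= z)) /\
  (forall x : S, exists y, y < x).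

Definition time_box (L : set S) : Prop :=
  finite_set L /\ past L `&` future L = set0.
End PosetDefs.

Section Configs.
Context {dS : Order.disp_t} {S : porderType dS}
        {dE : measure_display} {E : measurableType dE}.

Definition Fgen (U : set S) : set (set (S -> E)) :=
  [set A | exists x B, U x /\ measurable B /\ A = (fun w : S -> E => w x) @^-1` B].

Definition F (U : set S) : set (set (S -> E)) := <<s Fgen U >>.

Definition OmegaF (U : set S) := g_sigma_algebraType (Fgen U).

Definition okernel (R : realType) (L : set S) :=
  (S -> E) -> probability (OmegaF (~` future L)) R.

(* proper oriented kernel: conditions (b), (c), (d); (a) is built in the type *)
Definition proper_okernel (R : realType) (L : set S) (g : okernel R L) : Prop :=
  (forall A : set (S -> E), F (~` future L) A ->
     @measurable_fun _ _ (OmegaF (past L `|` outer L)) (\bar R) setT (fun w => g w A)) /\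
  (forall A : set (S -> E), F L A ->
     @measurable_fun _ _ (OmegaF (past L)) (\bar R) setT (fun w => g w A)) /\
  (forall B : set (S -> E), F (past L `|` outer L) B ->
     forall w, g w B = (\1_B w)%:E).

Definition okcomp (R : realType) (D L : set S) (gD : okernel R D) (gL : okernel R L)
  (A : set (S -> E)) (w : S -> E) : \bar R :=
  (\int[gD w]_(s in setT) gL s A)%E.
End Configs.

(* Main.v *)
Require Import Defs.
From HB Require Import structures.
From mathcomp Require Import all_boot all_order all_algebra.
From mathcomp Require Import all_classical all_reals all_analysis.
From mathcomp Require Import measurable_realfun.
Import Order.TTheory GRing.Theory Num.Theory.
Local Open Scope classical_set_scope.

Section SetFacts.
Context {dS : Order.disp_t} {S : porderType dS}.
Local Open Scope order_scope.
Variables (D L : set S).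
Hypotheses (tbD : time_box D) (tbL : time_box L) (DL : D `<=` outer L).

Lemma outer_sym : L `<=` outer D.
Proof. move=> x Lx y Dy; rewrite comparable_sym; exact: DL y Dy x Lx. Qed.

Lemma DLlt x y : D x -> L y -> ~ (x < y) /\ ~ (y < x).
Proof.
move=> Dx Ly; have /negP H := DL x Dx y Ly; split => h; apply: H.
  by rewrite /Order.comparable (ltW h).
by rewrite /Order.comparable (ltW h) orbT.
Qed.

Lemma notDL x : D x -> ~ L x.
Proof. by move=> Dx Lx; move/negP: (DL x Dx x Lx); apply; exact: comparablexx. Qed.

Lemma futureU : future (D `|` L) = future D `|` future L.
Proof.
apply/seteqP; split => x.
  move=> [nG [y [[Dy|Ly] yx]]].
    by left; split => //; [move=> ?; apply: nG; left|exists y].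
  by right; split => //; [move=> ?; apply: nG; right|exists y].
move=> [[nD [y [Dy yx]]]|[nL [y [Ly yx]]]].
- split; last by exists y; split => //; left.
  by move=> [/nD//|Lx]; move: (DLlt y x Dy Lx); tauto.
- split; last by exists y; split => //; right.
  by move=> [Dx|/nL//]; move: (DLlt x y Dx Ly); tauto.
Qed.

Lemma pastU : past (D `|` L) = past D `|` past L.
Proof.
apply/seteqP; split => x.
  move=> [nG [y [[Dy|Ly] yx]]].
    by left; split => //; [move=> ?; apply: nG; left|exists y].
  by right; split => //; [move=> ?; apply: nG; right|exists y].
move=> [[nD [y [Dy yx]]]|[nL [y [Ly yx]]]].
- split; last by exists y; split => //; left.
  by move=> [/nD//|Lx]; move: (DLlt y x Dy Lx); tauto.
- split; last by exists y; split => //; right.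
  by move=> [Dx|/nL//]; move: (DLlt x y Dx Ly); tauto.
Qed.

Lemma pastD_futureL x : past D x -> future L x -> False.
Proof.
move=> [_ [y [Dy xy]]] [_ [z [Lz zx]]].
by have [_ h] := DLlt y z Dy Lz; apply: h; exact: lt_trans xy.
Qed.

Lemma pastL_futureD x : past L x -> future D x -> False.
Proof.
move=> [_ [y [Ly xy]]] [_ [z [Dz zx]]].
by have [h _] := DLlt z y Dz Ly; apply: h; exact: lt_trans xy.
Qed.

Lemma tbU : time_box (D `|` L).
Proof.
split; first by rewrite finite_setU; split; [case: tbD|case: tbL].
rewrite pastU futureU; apply/seteqP; split => // x [[pD|pL] [fD|fL]].
- by case: tbD => _; rewrite -subset0 => /(_ x); apply.
- exact: pastD_futureL pD fL.
- exact: pastL_futureD pL fD.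
- by case: tbL => _; rewrite -subset0 => /(_ x); apply.
Qed.

End SetFacts.

Section SetFacts2.
Context {dS : Order.disp_t} {S : porderType dS}.
Local Open Scope order_scope.

Lemma notfuture_dec (U : set S) x : ~ future U x -> U x \/ past U x \/ outer U x.
Proof.
move=> nf; have [Ux|nUx] := pselect (U x); [by left|right].
have [[y [Uy c]]|no] := pselect (exists y, U y /\ (x >=< y)).
  case: (comparable_ltgtP c) => [xy|yx|exy].
  - by left; split => //; exists y.
  - by exfalso; apply: nf; split => //; exists y.
  - by exfalso; apply: nUx; rewrite exy.
by right => y Uy; apply/negP => c; apply: no; exists y; split.
Qed.

Lemma outerW (U V : set S) : U `<=` V -> outer V `<=` outer U.
Proof. by move=> UV x oV y Uy; apply: oV; apply: UV. Qed.

End SetFacts2.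

Section Basics.
Context {dS : Order.disp_t} {S : porderType dS}
        {dE : measure_display} {E : measurableType dE} {R : realType}.
Local Notation Om := (S -> E).
Local Notation FF := (@F dS S dE E).
Local Notation OF := (@OmegaF dS S dE E).

Lemma F_sigma U : sigma_algebra setT (FF U).
Proof. exact: smallest_sigma_algebra. Qed.

Lemma FT U : FF U setT.
Proof. exact: (@measurableT _ (OF U)). Qed.

Lemma F0 U : FF U set0.
Proof. exact: (@measurable0 _ (OF U)). Qed.

Lemma FI U A B : FF U A -> FF U B -> FF U (A `&` B).
Proof. exact: (@measurableI _ (OF U)). Qed.

Lemma FC U A : FF U A -> FF U (~` A).
Proof. exact: (@measurableC _ (OF U)). Qed.

Lemma Fmono0 U V : U `<=` V -> FF U `<=` FF V.
Proof.
move=> UV; apply: smallest_sub; first exact: F_sigma.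
move=> A [x [B [Ux [mB ->]]]]; apply: sub_sigma_algebra.
by exists x, B; split => //; exact: UV.
Qed.

Lemma Fmono U V A : U `<=` V -> FF U A -> FF V A.
Proof. by move=> UV; apply: Fmono0. Qed.

Lemma mlift U V (f : Om -> \bar R) : U `<=` V ->
  @measurable_fun _ _ (OF U) (\bar R) setT f ->
  @measurable_fun _ _ (OF V) (\bar R) setT f.
Proof.
move=> UV mf _ Y mY; have h := mf (@measurableT _ (OF U)) Y mY.
change (FF V (setT `&` f @^-1` Y)); change (FF U (setT `&` f @^-1` Y)) in h.
exact: Fmono _ _ _ UV h.
Qed.

Definition P3 (U1 U2 U3 : set S) : set (set Om) :=
  [set X | exists C1 C2 C3, [/\ FF U1 C1, FF U2 C2, FF U3 C3 &
     X = C1 `&` C2 `&` C3]].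

Lemma P3_setI U1 U2 U3 : setI_closed (P3 U1 U2 U3).
Proof.
move=> A B [C1 [C2 [C3 [h1 h2 h3 ->]]]] [C1' [C2' [C3' [h1' h2' h3' ->]]]].
exists (C1 `&` C1'), (C2 `&` C2'), (C3 `&` C3'); split; try exact: FI.
by apply/seteqP; split => w /=; tauto.
Qed.

Lemma P3_F U1 U2 U3 : P3 U1 U2 U3 `<=` FF (U1 `|` U2 `|` U3).
Proof.
move=> X [C1 [C2 [C3 [h1 h2 h3 ->]]]].
apply: FI; first apply: FI.
- by apply: (@Fmono U1 _ C1 _ h1) => x ?; left; left.
- by apply: (@Fmono U2 _ C2 _ h2) => x ?; left; right.
- by apply: (@Fmono U3 _ C3 _ h3) => x ?; right.
Qed.

Lemma gen3 U1 U2 U3 : FF (U1 `|` U2 `|` U3) `<=` <<s P3 U1 U2 U3 >>.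
Proof.
apply: smallest_sub; first exact: smallest_sigma_algebra.
move=> A [x [B [Ux [mB ->]]]]; apply: sub_sigma_algebra.
have cyl U : U x -> FF U ((fun w : Om => w x) @^-1` B).
  by move=> Ux'; apply: sub_sigma_algebra; exists x, B.
case: Ux => [[U1x|U2x]|U3x].
- exists ((fun w : Om => w x) @^-1` B), setT, setT; split; try exact: FT.
    exact: cyl.
  by rewrite !setIT.
- exists setT, ((fun w : Om => w x) @^-1` B), setT; split; try exact: FT.
    exact: cyl.
  by rewrite setIT setTI.
- exists setT, setT, ((fun w : Om => w x) @^-1` B); split; try exact: FT.
    exact: cyl.
  by rewrite !setTI.
Qed.

Lemma pi_lambda U1 U2 U3 (H : set (set Om)) : lambda_system setT H ->
  P3 U1 U2 U3 `<=` H -> FF (U1 `|` U2 `|` U3) `<=` H.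
Proof.
move=> lH PH A /gen3; apply: lambda_system_subset => //.
exact: P3_setI.
Qed.

End Basics.
Arguments FI {dS S dE E U A B}.
Arguments FC {dS S dE E U A}.
Arguments Fmono {dS S dE E U V A}.


Section MeasLemmas.
Context {dS : Order.disp_t} {S : porderType dS}
        {dE : measure_display} {E : measurableType dE} {R : realType}.
Local Notation Om := (S -> E).
Local Notation FF := (@F dS S dE E).
Local Notation OF := (@OmegaF dS S dE E).
Local Open Scope ereal_scope.

Lemma prob_fin V (P : probability (OF V) R) A : FF V A -> P A < +oo.
Proof. by move=> mA; apply: le_lt_trans (probability_le1 P mA) (ltry 1). Qed.

Lemma lam_meas V T0 (P : Om -> probability (OF V) R) :
  lambda_system setT [set A | FF V A /\
     @measurable_fun _ _ (OF T0) (\bar R) setT (fun w => P w A)].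
Proof.
split => //.
- split; first exact: FT.
  rewrite (_ : (fun w => P w setT) = cst 1); first exact: measurable_cst.
  by apply/funext => w; exact: probability_setT.
- move=> A B BA [mA fA] [mB fB]; split.
    exact: (@measurableD _ (OF V)).
  rewrite (_ : (fun w => P w (A `\` B)) = (fun w => P w A - P w B)).
    exact: emeasurable_funB.
  apply/funext => w; rewrite measureD //; last exact: prob_fin.
  by rewrite setIidr.
- move=> G ndG hG; split.
    by apply: (@bigcupT_measurable _ (OF V)) => i; case: (hG i).
  apply: (@emeasurable_fun_cvg _ (OF T0) R setT (fun n w => P w (G n))).

    by move=> n; case: (hG n).
  move=> w _; apply: (nondecreasing_cvg_mu (mu:=P w)) => //.
    by move=> i; case: (hG i).
  by apply: (@bigcupT_measurable _ (OF V)) => i; case: (hG i).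
Qed.

Lemma lam_eq V V1 V2 (P1 : probability (OF V1) R) (P2 : probability (OF V2) R) :
  FF V `<=` FF V1 -> FF V `<=` FF V2 ->
  lambda_system setT [set A | FF V A /\ P1 A = P2 A].
Proof.
move=> s1 s2; split => //.
- split; first exact: FT.
  by rewrite !probability_setT.
- move=> A B BA [mA fA] [mB fB]; split.
    exact: (@measurableD _ (OF V)).
  have AB : A `&` B = B.
    by apply/seteqP; split => x; [case|move=> Bx; split => //; exact: BA].
  rewrite !measureD // ?AB.
  + by congr (_ - _); [exact fA|exact fB].
  + exact (s2 _ mA). + exact (s2 _ mB). + by apply: prob_fin; exact (s2 _ mA).
  + exact (s1 _ mA). + exact (s1 _ mB). + by apply: prob_fin; exact (s1 _ mA).
- move=> G ndG hG; have mG : FF V (\bigcup_i G i).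
    by apply: (@bigcupT_measurable _ (OF V)) => i; case: (hG i).
  split => //.
  have m1 : forall i, FF V1 (G i) by move=> i; case: (hG i) => h _; exact (s1 _ h).
  have m2 : forall i, FF V2 (G i) by move=> i; case: (hG i) => h _; exact (s2 _ h).
  have c1 := @nondecreasing_cvg_mu _ (OF V1) R P1 G m1 (s1 _ mG) ndG.
  have c2 := @nondecreasing_cvg_mu _ (OF V2) R P2 G m2 (s2 _ mG) ndG.
  rewrite (_ : P1 \o G = P2 \o G) in c1; last first.
    by apply/funext => i /=; case: (hG i).
  exact: (cvg_unique _ c1 c2).
Qed.

Lemma pullout V (P : probability (OF V) R) B C w : FF V B -> FF V C ->
  P B = (\1_B w)%:E -> P (C `&` B) = (\1_B w)%:E * P C.
Proof.
move=> mB mC PB; have [Bw|nBw] := pselect (B w).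
- rewrite indicE mem_set // mul1e.
  have mCB : FF V (C `&` ~` B) by exact (FI mC (FC mB)).
  have nB : P (~` B) = 0.
    by rewrite probability_setC // PB indicE mem_set // subee.
  have h0 : P (C `&` ~` B) = 0.
    have : P (C `&` ~` B) <= P (~` B).
      apply: le_measure; rewrite ?inE.
      + exact (FI mC (FC mB)).
      + exact (FC mB).
      + exact: subIsetr.
    rewrite nB => h; apply/eqP; rewrite eq_le h measure_ge0 //.
  have eC : C = (C `&` B) `|` (C `&` ~` B) by rewrite -setIUr setUv setIT.
  have e1 : P C = P (C `&` B) + P (C `&` ~` B).
    rewrite {1}eC; apply: measureU.
    + exact (FI mC mB).
    + exact mCB.
    + by rewrite setIACA setICr setI0.
  by rewrite e1 h0 adde0.
- rewrite indicE memNset // mul0e.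
  have : P (C `&` B) <= P B.
    apply: le_measure; rewrite ?inE.
    + exact (FI mC mB).
    + exact mB.
    + exact: subIsetr.
  rewrite PB indicE memNset // => h; apply/eqP; rewrite eq_le h measure_ge0 //.
Qed.

End MeasLemmas.

Section KernelLemmas.
Context {dS : Order.disp_t} {S : porderType dS}
        {dE : measure_display} {E : measurableType dE} {R : realType}.
Local Notation Om := (S -> E).
Local Notation FF := (@F dS S dE E).
Local Notation OF := (@OmegaF dS S dE E).
Local Open Scope ereal_scope.

Lemma mind T0 B : FF T0 B ->
  @measurable_fun _ _ (OF T0) (\bar R) setT (fun s => (\1_B s)%:E).
Proof. move=> mB; apply/measurable_EFinP; exact: (@measurable_indic _ (OF T0)). Qed.

Lemma notfut_sub (L : set S) : time_box L -> past L `|` outer L `<=` ~` future L.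
Proof.
move=> [_ tb] x [px|ox] fx.
  by move: tb; rewrite -subset0 => /(_ x); apply.
case: fx => _ [y [Ly yx]]; move/negP: (ox y Ly); apply.
by rewrite /Order.comparable (ltW yx) orbT.
Qed.

Lemma L_notfut (L : set S) : L `<=` ~` future L.
Proof. by move=> x Lx [nL _]. Qed.

Variables (L : set S) (tbL : time_box L) (g : @okernel dS S dE E R L)
  (Hg : proper_okernel g).

Lemma kd B w : FF (past L `|` outer L) B -> g w B = (\1_B w)%:E.
Proof. by move=> mB; case: Hg => _ [_ h]; exact: h. Qed.

Lemma kpull B C s : FF (past L `|` outer L) B -> FF (~` future L) C ->
  g s (C `&` B) = (\1_B s)%:E * g s C.
Proof.
move=> mB mC; apply: pullout => //.
  exact (Fmono (@notfut_sub L tbL) mB).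
exact: kd.
Qed.

Lemma kmeasL U T0 : U `<=` past L `|` outer L -> past L `|` U `<=` T0 ->
  forall A, FF (L `|` U `|` U) A ->
  @measurable_fun _ _ (OF T0) (\bar R) setT (fun s => g s A).
Proof.
move=> UpL sT0 A hA.
have sub : L `|` U `|` U `<=` ~` future L.
  move=> x [[Lx|Ux]|Ux]; first exact: L_notfut.
  - by apply: notfut_sub => //; exact: UpL.
  - by apply: notfut_sub => //; exact: UpL.
suff : [set A | FF (~` future L) A /\
     @measurable_fun _ _ (OF T0) (\bar R) setT (fun w => g w A)] A by case.
refine (@pi_lambda _ _ _ _ L U U _ _ _ A hA); first exact: lam_meas.
move=> X [C1 [C2 [C3 [h1 h2 h3 ->]]]]; split.
  by apply (Fmono sub); apply: P3_F; exists C1, C2, C3.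
have e s : g s (C1 `&` C2 `&` C3) = (\1_(C2 `&` C3) s)%:E * g s C1.
  rewrite -setIA; apply: kpull.
  - exact (FI (Fmono UpL h2) (Fmono UpL h3)).
  - exact (Fmono (@L_notfut L) h1).
rewrite (_ : (fun s => _) = (fun s => (\1_(C2 `&` C3) s)%:E * g s C1)).
  2: by apply/funext => s; exact: e.
apply: emeasurable_funM.
  have sU : U `<=` T0 by move=> x Ux; apply: sT0; right.
  exact (@mind T0 _ (FI (Fmono sU h2) (Fmono sU h3))).
apply: (@mlift _ _ _ _ _ (past L)); first by move=> x px; apply: sT0; left.
by case: Hg => _ [hc _]; exact: hc.
Qed.

End KernelLemmas.

Section SetFacts3.
Context {dS : Order.disp_t} {S : porderType dS}.
Local Open Scope order_scope.
Variables (D L : set S) (DL : D `<=` outer L).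

Lemma pastL_sub : past L `<=` past D `|` outer D.
Proof.
move=> x px; have nf : ~ future D x by move=> fx; exact: (@pastL_futureD _ _ D L DL x px fx).
have [Dx|[pDx|oDx]] := @notfuture_dec _ _ D x nf; [|by left|by right].
case: px => _ [y [Ly xy]]; exfalso; move: (DL x Dx y Ly); move/negP; apply.
by rewrite /Order.comparable (ltW xy).
Qed.

Lemma pastL_notfutD : past L `<=` ~` future D.
Proof. by move=> x px fx; exact: (@pastL_futureD _ _ D L DL x px fx). Qed.

Lemma D_pastL : D `<=` past L `|` outer L.
Proof. by move=> x Dx; right; exact: DL. Qed.


Lemma V0sub_D : past (D `|` L) `|` outer (D `|` L) `<=` past D `|` outer D.
Proof.
move=> x [pG|oG].
  rewrite (@pastU _ _ D L DL) in pG; case: pG => [pD|pL]; first by left.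
  exact: pastL_sub.
by right; apply: (@outerW _ _ D (D `|` L)) => //; left.
Qed.

End SetFacts3.

Section SetFacts4.
Context {dS : Order.disp_t} {S : porderType dS}.
Local Open Scope order_scope.

Lemma notfut_dec_sub (U : set S) : ~` future U `<=` U `|` (past U `|` outer U).
Proof.
move=> x nf; have [Ux|[px|ox]] := @notfuture_dec _ _ U x nf; [by left|by right; left|by right; right].
Qed.

Lemma V0_notfut (U : set S) : time_box U -> U `|` (past U `|` outer U) `<=` ~` future U.
Proof. by move=> tb x [Ux|h]; [exact: L_notfut|exact: notfut_sub]. Qed.

End SetFacts4.

Section Comp.
Context {dS : Order.disp_t} {S : porderType dS}
        {dE : measure_display} {E : measurableType dE} {R : realType}.
Local Notation Om := (S -> E).
Local Notation FF := (@F dS S dE E).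
Local Notation OF := (@OmegaF dS S dE E).
Local Open Scope ereal_scope.

Variables (D L : set S) (tbD : time_box D) (tbL : time_box L) (DL : D `<=` outer L).
Variables (gD : @okernel dS S dE E R D) (gL : @okernel dS S dE E R L).
Hypotheses (HgD : proper_okernel gD) (HgL : proper_okernel gL).

Lemma meas_int A : FF (~` future (D `|` L)) A ->
  @measurable_fun _ _ (OF (~` future D)) (\bar R) setT (fun s => gL s A).
Proof.
move=> hA; set W0 := ~` future (D `|` L) `&` ~` L.
have fG : future D `|` future L = future (D `|` L) by rewrite (@futureU _ _ D L DL).
apply: (@kmeasL _ _ _ _ R L tbL gL HgL W0).
- move=> x [nfG nL]; have nfL : ~ future L x by move=> fx; apply: nfG; rewrite -fG; right.
  by have [//|[?|?]] := @notfuture_dec _ _ L x nfL; [left|right].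
- move=> x [px|[nfG _]].
    exact: (@pastL_notfutD _ _ D L DL).
  by move=> fx; apply: nfG; rewrite -fG; left.
- refine (Fmono _ hA) => x nfx; have [Lx|nLx] := pselect (L x).
    by left; left.
  by right.
Qed.

Lemma rect W C1 C2 C3 w : W `<=` past D `|` outer D -> W `<=` past L `|` outer L ->
  FF D C1 -> FF L C2 -> FF W C3 ->
  okcomp gD gL (C1 `&` C2 `&` C3) w = (\1_C3 w)%:E * gD w C1 * gL w C2.
Proof.
move=> WD WL h1 h2 h3; rewrite /okcomp.
set X := C1 `&` C3; set h := fun s => gL s C2.
have mX : FF (~` future D) X.
  exact (FI (Fmono (@L_notfut _ _ D) h1) (Fmono (subset_trans WD (@notfut_sub _ _ D tbD)) h3)).
have mh : @measurable_fun _ _ (OF (past L)) (\bar R) setT h.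
  by case: HgL => _ [hc _]; exact: hc.
have mh' : @measurable_fun _ _ (OF (~` future D)) (\bar R) setT h.
  exact: mlift (@pastL_notfutD _ _ D L DL) mh.
have e s : gL s (C1 `&` C2 `&` C3) = (\1_X s)%:E * h s.
  rewrite (_ : C1 `&` C2 `&` C3 = C2 `&` X); last first.
    by apply/seteqP; split => t; rewrite /X /setI /=; tauto.
  apply: (@kpull _ _ _ _ R L tbL gL HgL).
  - exact (FI (Fmono (@D_pastL _ _ D L DL) h1) (Fmono WL h3)).
  - exact (Fmono (@L_notfut _ _ L) h2).
transitivity (\int[gD w]_(s in setT) ((\1_X s)%:E * h s)).
  by apply: eq_integral => s _; exact: e.
transitivity (\int[gD w]_(s in setT) ((\1_X s)%:E * h w)).
  apply: ae_eq_integral => //.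
  - by apply: emeasurable_funM; [exact (@mind _ _ _ _ R _ X mX)|exact mh'].
  - by apply: emeasurable_funM; [exact (@mind _ _ _ _ R _ X mX)|exact: measurable_cst].
  have mN : FF (past L) (~` (setT `&` h @^-1` [set h w])).
    exact (FC (mh (@measurableT _ (OF (past L))) _ (emeasurable_set1 (h w)))).
  exists (~` (setT `&` h @^-1` [set h w])); split.
  - exact (Fmono (@pastL_notfutD _ _ D L DL) mN).
  - transitivity ((\1_(~` (setT `&` h @^-1` [set h w])) w : R)%:E).
      exact (@kd _ _ _ _ R D gD HgD _ w (Fmono (@pastL_sub _ _ D L DL) mN)).
    by rewrite indicE memNset //= => -[]; split.
  - move=> s /= hs [_ hsw]; apply: hs => _; rewrite /= hsw //.
have eX : gD w X = (\1_C3 w)%:E * gD w C1.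
  exact (@kpull _ _ _ _ R D tbD gD HgD C3 C1 w (Fmono WD h3) (Fmono (@L_notfut _ _ D) h1)).
rewrite ge0_integralZr //.
- transitivity (gD w X * h w); first by rewrite integral_indic // setIT.
  by rewrite eX.
all: try exact (@mind _ _ _ _ R _ X mX).
all: try by move=> s _; rewrite lee_fin indicE; case: (_ \in _).
all: try exact: measure_ge0.
Qed.

Definition compm (w : Om) : set (OF (~` future (D `|` L))) -> \bar R :=
  fun A => okcomp gD gL A w.

Let compm0 w : compm w set0 = 0.
Proof. by apply: integral0_eq => s _; exact: measure0. Qed.

Let compm_ge0 w A : 0 <= compm w A.
Proof. by apply: integral_ge0 => s _; exact: measure_ge0. Qed.

Let compm_sa w : semi_sigma_additive (compm w).
Proof.
move=> U mU tU mUU.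
have sGL : ~` future (D `|` L) `<=` ~` future L.
  by move=> x nfx fx; apply: nfx; rewrite (@futureU _ _ D L DL); right.
rewrite [X in _ --> X](_ : _ =
  \int[gD w]_y (\sum_(n <oo) gL y (U n))); last first.
  apply: eq_integral => y _; apply/esym/cvg_lim => //.
  apply: (@measure_semi_sigma_additive _ _ _ (gL y)) => //.
  - by move=> n; exact (Fmono sGL (mU n)).
  - exact (Fmono sGL mUU).
apply/cvg_closeP; split.
  by apply: is_cvg_nneseries => n _ _; exact: integral_ge0.
rewrite closeE// integral_nneseries//.
all: try by move=> n; exact: meas_int (mU n).
all: try by move=> n s _; exact: measure_ge0.
Qed.

HB.instance Definition _ w := isMeasure.Build _ _ R
  (compm w) (compm0 w) (compm_ge0 w) (@compm_sa w).

Let compmT w : compm w setT = 1.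
Proof.
rewrite /compm /okcomp.
transitivity (\int[gD w]_(s in setT) (cst 1 s)).
  by apply: eq_integral => s _; exact: probability_setT.
by rewrite integral_cst // mul1e; exact: probability_setT.
Qed.

HB.instance Definition _ w := Measure_isProbability.Build _ _ R (compm w) (compmT w).

Definition gG : @okernel dS S dE E R (D `|` L) := fun w => compm w.

Lemma gGE w A : gG w A = okcomp gD gL A w.
Proof. by []. Qed.

Let V0D : past (D `|` L) `|` outer (D `|` L) `<=` past D `|` outer D.
Proof. exact: (@V0sub_D _ _ D L DL). Qed.

Let V0L : past (D `|` L) `|` outer (D `|` L) `<=` past L `|` outer L.
Proof. rewrite (setUC D L); exact: (@V0sub_D _ _ L D (@outer_sym _ _ D L DL)). Qed.

Let pDG : past D `<=` past (D `|` L).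
Proof. by move=> x px; rewrite (@pastU _ _ D L DL); left. Qed.

Let pLG : past L `<=` past (D `|` L).
Proof. by move=> x px; rewrite (@pastU _ _ D L DL); right. Qed.

Let tbG : time_box (D `|` L).
Proof. exact: (@tbU _ _ D L tbD tbL DL). Qed.

Let mD C1 T0 : FF D C1 -> past D `<=` T0 ->
  @measurable_fun _ _ (OF T0) (\bar R) setT (fun w => gD w C1).
Proof.
move=> h1 sT; apply: (@mlift _ _ _ _ _ (past D)) => //.
by case: HgD => _ [hc _]; exact: hc.
Qed.

Let mL C2 T0 : FF L C2 -> past L `<=` T0 ->
  @measurable_fun _ _ (OF T0) (\bar R) setT (fun w => gL w C2).
Proof.
move=> h2 sT; apply: (@mlift _ _ _ _ _ (past L)) => //.
by case: HgL => _ [hc _]; exact: hc.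
Qed.

Lemma gG_b A : FF (~` future (D `|` L)) A ->
  @measurable_fun _ _ (OF (past (D `|` L) `|` outer (D `|` L))) (\bar R) setT
    (fun w => gG w A).
Proof.
move=> hA; set V0 := past (D `|` L) `|` outer (D `|` L).
have sub2 : D `|` L `|` V0 `<=` ~` future (D `|` L) := @V0_notfut _ _ (D `|` L) tbG.
suff : [set A | FF (~` future (D `|` L)) A /\ @measurable_fun _ _ (OF V0) (\bar R) setT (fun w => gG w A)] A by case.
refine (@pi_lambda _ _ _ _ D L V0 _ _ _ A (Fmono (@notfut_dec_sub _ _ (D `|` L)) hA)).
  exact: lam_meas.
move=> X hX; have [C1 [C2 [C3 [h1 h2 h3 eX]]]] := hX; split.
  exact (Fmono sub2 (@P3_F _ _ _ _ _ _ _ X hX)).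
rewrite eX (_ : (fun w => gG w (C1 `&` C2 `&` C3)) =
   (fun w => (\1_C3 w)%:E * gD w C1 * gL w C2)); last first.
  by apply/funext => w; rewrite gGE (@rect V0).
apply: emeasurable_funM; first apply: emeasurable_funM.
- exact (@mind _ _ _ _ R _ _ h3).
- by apply: mD => // x px; left; exact: pDG.
- by apply: mL => // x px; left; exact: pLG.
Qed.

Lemma gG_c A : FF (D `|` L) A ->
  @measurable_fun _ _ (OF (past (D `|` L))) (\bar R) setT (fun w => gG w A).
Proof.
move=> hA.
have sub1 : D `|` L `<=` D `|` L `|` set0 by move=> x h; left.
have sub2 : D `|` L `|` set0 `<=` ~` future (D `|` L).
  by move=> x [h|//]; exact: L_notfut.
suff : [set A | FF (~` future (D `|` L)) A /\ @measurable_fun _ _ (OF (past (D `|` L))) (\bar R) setT (fun w => gG w A)] A by case.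
refine (@pi_lambda _ _ _ _ D L set0 _ _ _ A (Fmono sub1 hA)).
  exact: lam_meas.
move=> X hX; have [C1 [C2 [C3 [h1 h2 h3 eX]]]] := hX; split.
  exact (Fmono sub2 (@P3_F _ _ _ _ _ _ _ X hX)).
rewrite eX (_ : (fun w => gG w (C1 `&` C2 `&` C3)) =
   (fun w => (\1_C3 w)%:E * gD w C1 * gL w C2)); last first.
  by apply/funext => w; rewrite gGE (@rect set0) //; exact: sub0set.
apply: emeasurable_funM; first apply: emeasurable_funM.
- exact (@mind _ _ _ _ R _ _ (Fmono (@sub0set _ (past (D `|` L))) h3)).
- exact: mD.
- exact: mL.
Qed.

Lemma gG_d B w : FF (past (D `|` L) `|` outer (D `|` L)) B -> gG w B = (\1_B w)%:E.
Proof.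
move=> hB; rewrite gGE.
transitivity (okcomp gD gL (setT `&` setT `&` B) w); first by rewrite !setTI.
rewrite (@rect (past (D `|` L) `|` outer (D `|` L))) //; try exact: FT.
transitivity ((\1_B w : R)%:E * 1 * 1); last by rewrite !mule1.
by congr (_ * _ * _); exact: probability_setT.
Qed.

Lemma proper_gG : proper_okernel gG.
Proof.
split; first exact: gG_b.
split; first exact: gG_c.
by move=> B hB w; exact: gG_d.
Qed.

End Comp.

Theorem mainTheorem17 (R : realType) (dS : Order.disp_t) (S : porderType dS)
  (dE : measure_display) (E : measurableType dE)
  (HS : @standing_assumptions dS S)
  (D L : set S) (HD : time_box D) (HL : time_box L) (HDL : D `<=` outer L)
  (gD : @okernel dS S dE E R D) (gL : @okernel dS S dE E R L)
  (HgD : proper_okernel gD) (HgL : proper_okernel gL) :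
  let G := D `|` L in
  (* (i) *)
  (time_box G /\ future G = future D `|` future L /\ past G = past D `|` past L) /\
  (* (ii) well defined: the integrand is F_{S \ D_+}-measurable ... *)
  (forall A : set (S -> E), F (~` future G) A ->
     F (~` future L) A /\
     @measurable_fun _ _ (OmegaF (~` future D)) (\bar R) setT (fun s => gL s A)) /\
  (* ... and it is (the restriction to F_{S \ G_+} of) a proper oriented kernel on G *)
  (exists gG : @okernel dS S dE E R G,
     (forall (A : set (S -> E)) (w : S -> E), F (~` future G) A ->
        gG w A = okcomp gD gL A w) /\
     proper_okernel gG) /\
  (* (iii) *)
  (countable [set: E] ->
   forall (A : set (S -> E)) (w : S -> E), F (~` future G) A ->
     okcomp gD gL A w = okcomp gL gD A w).
Proof.
move=> G.
have sGL : ~` future G `<=` ~` future L.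
  by move=> x nfx fx; apply: nfx; rewrite /G (@futureU _ _ D L HDL); right.
split.
  split; first exact: (@tbU _ _ D L HD HL HDL).
  by split; [exact: (@futureU _ _ D L HDL)|exact: (@pastU _ _ D L HDL)].
split.
  move=> A hA; split; first exact (Fmono sGL hA).
  exact: (@meas_int _ _ _ _ R D L HL HDL gL HgL A hA).
split.
  exists (@gG _ _ _ _ R D L HL HDL gD gL HgL); split.
    by move=> A w _; exact: gGE.
  exact: (@proper_gG _ _ _ _ R D L HD HL HDL gD gL HgD HgL).
move=> _ A w hA.
set V0 := past G `|` outer G.
have HLD : L `<=` outer D := @outer_sym _ _ D L HDL.
have V0D : V0 `<=` past D `|` outer D := @V0sub_D _ _ D L HDL.
have V0L : V0 `<=` past L `|` outer L.
  by rewrite /V0 /G (setUC D L); exact: (@V0sub_D _ _ L D HLD).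
have sGG : ~` future G `<=` ~` future (L `|` D) by rewrite /G setUC.
set g1 := @gG _ _ _ _ R D L HL HDL gD gL HgL.
set g2 := @gG _ _ _ _ R L D HD HLD gL gD HgD.
suff : [set A | F (~` future G) A /\ g1 w A = g2 w A] A.
  by case=> _ e; rewrite -(@gGE _ _ _ _ R D L HL HDL gD gL HgL) -/g1 e /g2 gGE.
refine (@pi_lambda _ _ _ _ D L V0 _ _ _ A (Fmono (@notfut_dec_sub _ _ (D `|` L)) hA)).
  apply: lam_eq => //; move=> B hB; exact (Fmono sGG hB).
move=> X hX; have [C1 [C2 [C3 [h1 h2 h3 eX]]]] := hX; split.
  refine (Fmono _ (@P3_F _ _ _ _ _ _ _ X hX)).
  exact: (@V0_notfut _ _ (D `|` L) (@tbU _ _ D L HD HL HDL)).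
rewrite eX /g1 /g2 !gGE.
rewrite (@rect _ _ _ _ R D L HD HL HDL gD gL HgD HgL V0) //.
rewrite (_ : C1 `&` C2 `&` C3 = C2 `&` C1 `&` C3); last first.
  by apply/seteqP; split => t; rewrite /setI /=; tauto.
rewrite (@rect _ _ _ _ R L D HL HD HLD gL gD HgL HgD V0) //.
by rewrite muleAC.
Qed.
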